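(* Under the standing assumptions, if $a<1/4$ then $\lim_{\theta\to\pi^-}g_m(\theta)$ has sign $(-1)^m$.
   Context: Standing assumptions: $a,b\in\mathbb{R}$ with $b>0$, $1+a+b>0$, $9-27a+b>0$, $2-8a+8a^2+ab\ne0$, $b+1-a\ne0$. Let $f^*(\zeta,\theta)=(\zeta+2\cos\theta)(2\zeta\cos\theta+1)+b\zeta-a(\zeta+2\cos\theta)^3$. Under these assumptions, for each $\theta\in(\pi/2,\pi)$ the polynomial $f^*(\cdot,\theta)$ has exactly one real zero in $(-1,1)$; denote it $w(\theta)$ and set $\zeta(\theta)=1/w(\theta)$. Define $$g_m(\theta)=\frac{(\zeta(\theta)-\cos\theta)\sin((m+1)\theta)}{\sin\theta}-\cos((m+1)\theta)+\frac{1}{\zeta(\theta)^{m+1}}.$$ *)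

(* Defs.v *)
From Stdlib Require Import Reals.
Open Scope R_scope.

Definition fstar (a b zeta theta : R) : R :=
  (zeta + 2 * cos theta) * (2 * zeta * cos theta + 1) + b * zeta
  - a * (zeta + 2 * cos theta) ^ 3.

Definition standing (a b : R) : Prop :=
  0 < b /\ 1 + a + b > 0 /\ 9 - 27 * a + b > 0 /\
  2 - 8 * a + 8 * a ^ 2 + a * b <> 0 /\ b + 1 - a <> 0.

(* w is the (unique, under the standing assumptions) real zero of
   fstar a b . theta in (-1,1), for every theta in (pi/2, pi). *)
Definition is_root_selector (a b : R) (w : R -> R) : Prop :=
  forall theta, PI / 2 < theta < PI ->
    -1 < w theta < 1 /\ fstar a b (w theta) theta = 0.

Definition g (w : R -> R) (m : nat) (theta : R) : R :=
  let zeta := 1 / w theta in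
  (zeta - cos theta) * sin (INR (m + 1) * theta) / sin theta
  - cos (INR (m + 1) * theta) + 1 / zeta ^ (m + 1).

(* Main.v *)
Require Import Defs.
From Stdlib Require Import Reals Lra Psatz.
Open Scope R_scope.

Lemma lim_comp_cont (h f : R -> R) (D : R -> Prop) (l x0 : R) :
  continuity_pt h l -> limit1_in f D l x0 ->
  limit1_in (fun x => h (f x)) D (h l) x0.
Proof.
  intros Hh Hf eps He.
  destruct (Hh eps He) as [a1 [Ha1 H1]].
  destruct (Hf a1 Ha1) as [a2 [Ha2 H2]].
  exists a2; split; auto.
  intros x [Dx Hx].
  destruct (Req_dec (f x) l) as [E|E].
  - rewrite E; simpl; rewrite R_dist_eq; lra.
  - apply (H1 (f x)); split.
    + split; [exact I | auto].
    + apply H2; auto.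
Qed.

Lemma lim_id (D : R -> Prop) (x0 : R) : limit1_in (fun x => x) D x0 x0.
Proof. intros eps He; exists eps; split; auto. intros x [_ H]; exact H. Qed.

Lemma lim_ext (f h : R -> R) (D : R -> Prop) (l x0 : R) :
  (forall x, D x -> f x = h x) -> limit1_in f D l x0 -> limit1_in h D l x0.
Proof.
  intros E Hf eps He. destruct (Hf eps He) as [a [Ha H]].
  exists a; split; auto. intros x [Dx Hx]. rewrite <- (E x Dx). apply H; auto.
Qed.

Fixpoint U (k : nat) (c : R) : R :=
  match k with
  | O => 1
  | S O => 2 * c
  | S ((S k') as k1) => 2 * c * U k1 c - U k' c
  end.

Lemma U_sin (k : nat) (t : R) :
  sin (INR (k + 1) * t) = sin t * U k (cos t) /\
  sin (INR (k + 2) * t) = sin t * U (S k) (cos t).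
Proof.
  induction k as [|k [IH1 IH2]].
  - split.
    + simpl. replace (1*t) with t by ring. ring.
    + replace (INR (0+2) * t) with (t + t) by (simpl; ring). rewrite sin_plus. simpl. ring.
  - split.
    + replace (k + 1)%nat with (S k) by lia. replace (S k + 1)%nat with (k+2)%nat by lia. exact IH2.
    + replace (S k + 2)%nat with (k + 3)%nat by lia.
      change (U (S (S k)) (cos t)) with (2 * cos t * U (S k) (cos t) - U k (cos t)).
      assert (E1: INR (k+3) * t = INR (k+2) * t + t) by (rewrite !plus_INR; simpl; ring).
      assert (E2: INR (k+1) * t = INR (k+2) * t - t) by (rewrite !plus_INR; simpl; ring).
      rewrite E1. rewrite E2 in IH1. rewrite sin_plus.
      rewrite sin_minus in IH1.
      rewrite Rmult_minus_distr_l, <- IH1.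
      replace (sin t * (2 * cos t * U (S k) (cos t))) with (2 * cos t * (sin t * U (S k) (cos t))) by ring.
      rewrite <- IH2. ring.
Qed.

Lemma U_m1 (k : nat) : U k (-1) = (-1) ^ k * INR (k + 1) /\ U (S k) (-1) = (-1) ^ (S k) * INR (k + 2).
Proof.
  induction k as [|k [IH1 IH2]].
  - simpl. split; ring.
  - split.
    + replace (k + 2)%nat with (S k + 1)%nat in IH2 by lia. exact IH2.
    + change (U (S (S k)) (-1)) with (2 * (-1) * U (S k) (-1) - U k (-1)).
      rewrite IH1, IH2. rewrite !plus_INR, !S_INR. simpl. ring.
Qed.

Lemma U_cont (k : nat) (c : R) : continuity_pt (U k) c /\ continuity_pt (U (S k)) c.
Proof.
  induction k as [|k [IH1 IH2]].
  - split; simpl.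
    + apply continuity_pt_const. intros x y; auto.
    + apply continuity_pt_mult. apply continuity_pt_const. intros x y; auto.
      apply derivable_continuous_pt. apply derivable_pt_id.
  - split; auto.
    assert (E: U (S (S k)) = fun x => 2 * x * U (S k) x - U k x) by reflexivity.
    rewrite E.
    apply continuity_pt_minus; auto.
    apply (continuity_pt_mult (fun x => 2 * x) (U (S k))); auto.
    apply continuity_pt_mult. apply continuity_pt_const. intros x y; auto.
    apply derivable_continuous_pt. apply derivable_pt_id.
Qed.

Lemma cos_nPI (n : nat) : cos (INR n * PI) = (-1) ^ n.
Proof.
  induction n as [|n IH].
  - simpl. rewrite Rmult_0_l, cos_0. ring.
  - rewrite S_INR. replace ((INR n + 1) * PI) with (INR n * PI + PI) by ring.
    rewrite neg_cos, IH. simpl. ring.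
Qed.

Definition P (a b w : R) := -a*(w-2)^3 + (w-2)*(1-2*w) + b*w.
Definition Q (a b x y : R) := -a*(x^2+x*y+y^2) + (6*a-2)*(x+y) + (5-12*a+b).

Lemma PQ a b x y : P a b x - P a b y = (x - y) * Q a b x y.
Proof. unfold P, Q. ring. Qed.

Lemma QE a b x y : Q a b x y = ((1-x)/2*(9-27*a+b) + (1+x)/2*(1-3*a+b) + 3*a*(1-x^2)
       + (1-y)/2*(9-27*a+b) + (1+y)/2*(1-3*a+b) + 3*a*(1-y^2))/2 + a*(x-y)^2/2.
Proof. unfold Q. field. Qed.

Lemma Q_pos a b x y : standing a b -> a < 1/4 -> -1 <= x <= 1 -> -1 <= y <= 1 ->
  Rmin (1/4) (9 - 27*a + b) <= Q a b x y.
Proof.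
  intros [Hb [H1 [H2 _]]] Ha Hx Hy.
  destruct (Rlt_or_le a 0) as [Hn|Hp].
  - apply Rle_trans with (1/4); [apply Rmin_l|].
    unfold Q.
    assert (0 <= x^2+x*y+y^2) by nra.
    assert ((6*a-2)*(x+y) >= -(2-6*a)*2) by nra.
    nra.
  - rewrite QE.
    set (m := Rmin (1/4) (9 - 27*a + b)).
    assert (m <= 1/4) by apply Rmin_l.
    assert (m <= 9-27*a+b) by apply Rmin_r.
    assert ((1-x)/2*(9-27*a+b) + (1+x)/2*(1-3*a+b) >= m) by nra.
    assert ((1-y)/2*(9-27*a+b) + (1+y)/2*(1-3*a+b) >= m) by nra.
    assert (0 <= 3*a*(1-x^2)) by (apply Rmult_le_pos; nra).
    assert (0 <= 3*a*(1-y^2)) by (apply Rmult_le_pos; nra).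
    assert (0 <= a*(x-y)^2) by (apply Rmult_le_pos; [lra | apply pow2_ge_0]).
    lra.
Qed.

Definition Rr (a w d : R) := 2*(w-2)*w + 2 - 4*w + 4*w*d - a*(6*(w-2)^2 + 12*(w-2)*d + 8*d^2).

Lemma fstar_P a b w t : fstar a b w t = P a b w + (1 + cos t) * Rr a w (1 + cos t).
Proof. unfold fstar, P, Rr. ring. Qed.

Lemma Rr_bound a w d : -1 <= w <= 1 -> 0 <= d <= 2 -> Rabs (Rr a w d) <= 20 + 158 * Rabs a.
Proof.
  intros Hw Hd. unfold Rr.
  set (B := 6*(w-2)^2 + 12*(w-2)*d + 8*d^2).
  assert (HB: Rabs B <= 158) by (unfold B; apply Rabs_le; split; nra).
  assert (HA: Rabs (2*(w-2)*w + 2 - 4*w + 4*w*d) <= 20) by (apply Rabs_le; split; nra).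
  set (A := 2*(w-2)*w + 2 - 4*w + 4*w*d) in *.
  replace (A - a * B) with (A + - (a * B)) by ring.
  eapply Rle_trans. apply Rabs_triang.
  rewrite Rabs_Ropp, Rabs_mult.
  assert (Rabs a * Rabs B <= Rabs a * 158) by (apply Rmult_le_compat_l; [apply Rabs_pos|auto]).
  lra.
Qed.

Theorem mainTheorem19 (a b : R) (w : R -> R) (m : nat) :
  standing a b ->
  is_root_selector a b w ->
  a < 1 / 4 ->
  exists L : R,
    limit1_in (g w m) (fun theta => PI / 2 < theta < PI) L PI /\
    0 < (-1) ^ m * L.
Proof.
  intros Hst Hsel Ha.
  pose proof Hst as [Hb [H1 [H2 _]]].
  assert (HcP: continuity (P a b)) by (unfold P; reg).
  assert (HP0: P a b 0 < 0) by (unfold P; simpl; lra).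
  assert (HP1: 0 < P a b 1) by (unfold P; simpl; lra).
  destruct (IVT (P a b) 0 1 HcP ltac:(lra) HP0 HP1) as [w0 [Hw0 HPw0]].
  assert (Hw0': 0 < w0 < 1).
  { split; destruct Hw0 as [Hl Hr].
    - destruct Hl as [Hl|Hl]; auto. subst. lra.
    - destruct Hr as [Hr|Hr]; auto. subst. lra. }
  clear Hw0.
  set (D := fun theta => PI / 2 < theta < PI).
  set (dl := Rmin (1/4) (9 - 27*a + b)).
  assert (Hdl: 0 < dl) by (unfold dl; apply Rmin_glb_lt; lra).
  set (K := 20 + 158 * Rabs a).
  assert (HK: 0 < K) by (unfold K; pose proof (Rabs_pos a); lra).
  assert (Key: forall t, D t -> dl * Rabs (w t - w0) <= (1 + cos t) * K).
  { intros t Ht. destruct (Hsel t Ht) as [Hw Hf].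
    rewrite fstar_P in Hf.
    pose proof (COS_bound t) as Hc.
    assert (HQ: dl <= Q a b (w t) w0) by (apply Q_pos; auto; lra).
    pose proof (PQ a b (w t) w0) as E. rewrite HPw0, Rminus_0_r in E.
    assert (E2: P a b (w t) = - ((1 + cos t) * Rr a (w t) (1 + cos t))) by lra.
    assert (HR: Rabs (Rr a (w t) (1 + cos t)) <= K) by (apply Rr_bound; lra).
    assert (HA: Rabs (P a b (w t)) <= (1 + cos t) * K).
    { rewrite E2, Rabs_Ropp, Rabs_mult, (Rabs_right (1 + cos t)) by lra.
      apply Rmult_le_compat_l; lra. }
    rewrite E, Rabs_mult, (Rabs_right (Q a b (w t) w0)) in HA by lra.
    pose proof (Rabs_pos (w t - w0)).
    nra. }
  assert (Hlimw: limit1_in w D w0 PI).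
  { intros eps He.
    destruct (continuity_cos PI (eps * dl / K)) as [alp [Halp H]].
    { apply Rdiv_lt_0_compat; [apply Rmult_lt_0_compat|]; lra. }
    exists alp; split; auto.
    intros t [Ht Hd]. simpl in *.
    assert (Hc: R_dist (cos t) (cos PI) < eps * dl / K).
    { apply H. split; [split; [exact I | ] | exact Hd]. unfold D in Ht; lra. }
    rewrite cos_PI in Hc. unfold R_dist in *.
    pose proof (Key t Ht) as Kt.
    pose proof (COS_bound t).
    apply Rabs_def2 in Hc.
    assert (h1: (1 + cos t) * K < eps * dl).
    { assert (1 + cos t < eps * dl / K) by lra.
      apply Rmult_lt_compat_r with (r := K) in H3; auto.
      unfold Rdiv in H3. rewrite Rmult_assoc, Rinv_l in H3 by lra. lra. }
    pose proof (Rabs_pos (w t - w0)).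
    nra. }
  assert (Hlimc: limit1_in cos D (cos PI) PI).
  { apply (lim_comp_cont cos (fun x => x)). apply continuity_cos. apply lim_id. }
  rewrite cos_PI in Hlimc.
  set (L := (1 / w0 - (-1)) * U m (-1) - cos (INR (m + 1) * PI) + w0 ^ (m + 1)).
  exists L. split.
  - apply lim_ext with (f := fun t => (1 / w t - cos t) * U m (cos t) - cos (INR (m + 1) * t) + w t ^ (m + 1)).
    + intros t Ht. unfold g.
      assert (Hs: 0 < sin t) by (apply sin_gt_0; unfold D in Ht; lra).
      rewrite (proj1 (U_sin m t)).
      assert (E: 1 / (1 / w t) ^ (m + 1) = w t ^ (m + 1)).
      { unfold Rdiv. rewrite !Rmult_1_l, pow_inv, Rinv_inv. reflexivity. }
      rewrite E. set (z := 1 / w t). field. lra.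
    + unfold L. apply limit_plus; [apply limit_minus; [apply limit_mul; [apply limit_minus|]|]|].
      * apply (lim_comp_cont (fun x => 1 / x) w); auto. reg. lra.
      * exact Hlimc.
      * apply (lim_comp_cont (U m) cos); auto. apply (proj1 (U_cont m (-1))).
      * apply (lim_comp_cont (fun x => cos (INR (m + 1) * x)) (fun x => x)); [reg | apply lim_id].
      * apply (lim_comp_cont (fun x => x ^ (m + 1)) w); auto. reg.
  - unfold L. rewrite cos_nPI, (proj1 (U_m1 m)).
    set (s := (-1) ^ m).
    assert (Hss: s * s = 1).
    { unfold s. rewrite <- Rpow_mult_distr. replace (-1 * -1) with 1 by ring. apply pow1. }
    assert (Hs1: (-1) ^ (m + 1) = - s) by (unfold s; rewrite pow_add; simpl; ring).
    rewrite Hs1.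
    assert (Hp: 0 <= w0 ^ (m + 1) < 1) by (apply pow_lt_1_compat; [lra | lia]).
    assert (Habs: Rabs (s * w0 ^ (m + 1)) < 1).
    { rewrite Rabs_mult. unfold s. rewrite pow_1_abs, Rabs_right by lra. lra. }
    apply Rabs_def2 in Habs.
    assert (Hinv: 1 < 1 / w0).
    { unfold Rdiv. rewrite Rmult_1_l. rewrite <- Rinv_1. apply Rinv_lt_contravar; lra. }
    assert (Hm: 0 < INR (m + 1)) by (apply lt_0_INR; lia).
    replace (s * ((1 / w0 - -1) * (s * INR (m + 1)) - - s + w0 ^ (m + 1)))
      with ((s * s) * ((1 / w0 + 1) * INR (m + 1) + 1) + s * w0 ^ (m + 1)) by ring.
    rewrite Hss. nra.
Qed.
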